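(* Every real planar quadratic differential system having a finite semi-elemental double saddle-node $\overline{sn}_{(2)}$ and an infinite saddle-node of type $\overline{\binom{0}{2}}SN$ located at the point at infinity in the direction defined by the eigenvector of the saddle-node with null eigenvalue can be brought, via an affine change of coordinates and a time rescaling, to the normal form $$\dot x = x^2+2hxy+ky^2,\qquad \dot y = y+xy+ny^2,$$ where $h,k,n$ are real parameters.
   Context: A singular point $r$ of a planar vector field $X$ is semi-elemental if $\det DX(r)=0$ but $\operatorname{tr} DX(r)\neq 0$. A finite double saddle-node $\overline{sn}_{(2)}$ is a semi-elemental finite singular point of multiplicity two whose neighborhood consists of two hyperbolic sectors and one parabolic sector. Infinite singular points are those of the Poincaré compactification on the line at infinity; e.g. in the chart $x=1/z$, $y=u/z$ the line at infinity is $z=0$ and the point at infinity in the direction of the $x$-axis is $(u,z)=(0,0)$. An infinite singular point is a saddle-node of type $\overline{\binom{0}{2}}SN$ if it is a semi-elemental saddle-node of multiplicity two on the line at infinity, formed by the collision of an infinite saddle with an infinite node, i.e. its eigendirection with zero eigenvalue is the line at infinity. *)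

(* Defs.v *)
From HB Require Import structures.
From mathcomp Require Import all_boot all_order all_algebra.
From mathcomp Require Import mpoly.
Set Implicit Arguments. Unset Strict Implicit. Unset Printing Implicit Defensive.
Import Order.TTheory GRing.Theory Num.Theory.
Local Open Scope ring_scope.

Section Defs.
Variable R : realFieldType.

Definition i0 : 'I_2 := ord0.
Definition i1 : 'I_2 := ord_max.

Definition vfield := 'I_2 -> {mpoly R[2]}.
Definition mkvf (P Q : {mpoly R[2]}) : vfield :=
  fun i => if i == i0 then P else Q.

Definition evp (p : {mpoly R[2]}) (x : 'cV[R]_2) : R := p.@[fun j => x j 0].
Definition evf (F : vfield) (x : 'cV[R]_2) : 'cV[R]_2 := \col_i evp (F i) x.
Definition pt2 (a b : R) : 'cV[R]_2 := \col_i (if i == i0 then a else b).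

(* real planar quadratic system: max(deg P, deg Q) = 2 (msize = degree + 1) *)
Definition quadratic_system (P Q : {mpoly R[2]}) : Prop :=
  maxn (msize P) (msize Q) = 3%N.

Definition singular_point (F : vfield) (r : 'cV[R]_2) : Prop := evf F r = 0.

Definition jac (F : vfield) (r : 'cV[R]_2) : 'M[R]_2 :=
  \matrix_(i, j) evp ((F i)^`M(j)) r.

Definition semi_elemental (F : vfield) (r : 'cV[R]_2) : Prop :=
  singular_point F r /\ \det (jac F r) = 0 /\ \tr (jac F r) != 0.

Definition null_eigvec (F : vfield) (r : 'cV[R]_2) (v : 'cV[R]_2) : Prop :=
  v != 0 /\ jac F r *m v = 0.

Definition second_order_term (F : vfield) (r w v : 'cV[R]_2) : R :=
  \sum_(i < 2) w i 0 * \sum_(j < 2) \sum_(k < 2)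
       evp (((F i)^`M(j))^`M(k)) r * v j 0 * v k 0.

(* semi-elemental singular point of multiplicity exactly two: along the
   (one-dimensional) centre direction v, projected on the left null vector w,
   the quadratic term does not vanish.  By the theorem on semi-elemental
   points (Andronov; Dumortier-Llibre-Artes Thm 2.19) such a point is a
   saddle-node (two hyperbolic sectors, one parabolic sector). *)
Definition semi_elemental_mult2 (F : vfield) (r : 'cV[R]_2) : Prop :=
  semi_elemental F r /\
  exists v w : 'cV[R]_2, null_eigvec F r v /\ w != 0 /\
    w^T *m jac F r = 0 /\ second_order_term F r w v != 0.

Definition finite_double_saddle_node (F : vfield) (r : 'cV[R]_2) : Prop :=
  semi_elemental_mult2 F r.

(* chart U1: x = 1/z, y = u/z; variables (u, z) = ('X_0, 'X_1).
   homU1 p = z^2 p(1/z, u/z) *)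
Definition homU1 (p : {mpoly R[2]}) : {mpoly R[2]} :=
  \sum_(m <- msupp p)
     p@_m *: ('X_i0 ^+ (m i1) * 'X_i1 ^+ (2 - (m i0 + m i1))).
(* chart U2: x = v/z, y = 1/z; variables (v, z) = ('X_0, 'X_1).
   homU2 p = z^2 p(v/z, 1/z) *)
Definition homU2 (p : {mpoly R[2]}) : {mpoly R[2]} :=
  \sum_(m <- msupp p)
     p@_m *: ('X_i0 ^+ (m i0) * 'X_i1 ^+ (2 - (m i0 + m i1))).

(* U1:  u' = z^2 (Q - uP)(1/z,u/z),  z' = - z^3 P(1/z,u/z) *)
Definition chartU1 (P Q : {mpoly R[2]}) : vfield :=
  mkvf (homU1 Q - 'X_i0 * homU1 P) (- ('X_i1 * homU1 P)).
(* U2:  v' = z^2 (P - vQ)(v/z,1/z),  z' = - z^3 Q(v/z,1/z) *)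
Definition chartU2 (P Q : {mpoly R[2]}) : vfield :=
  mkvf (homU2 P - 'X_i0 * homU2 Q) (- ('X_i1 * homU2 Q)).

(* the point at infinity in the direction of the nonzero vector v,
   given as (local chart field, point in that chart) *)
Definition infinite_point_in_direction (P Q : {mpoly R[2]}) (v : 'cV[R]_2)
  : vfield * 'cV[R]_2 :=
  if v i0 0 != 0 then (chartU1 P Q, pt2 (v i1 0 / v i0 0) 0)
  else (chartU2 P Q, pt2 0 0).

Definition infinite_saddle_node_02 (G : vfield) (p : 'cV[R]_2) : Prop :=
  p i1 0 = 0 /\ semi_elemental_mult2 G p /\
  (forall v, null_eigvec G p v -> v i1 0 = 0).

Definition normal_form (h k n : R) : vfield :=
  mkvf ('X_i0 ^+ 2 + (2 * h) *: ('X_i0 * 'X_i1) + k *: 'X_i1 ^+ 2)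
       ('X_i1 + 'X_i0 * 'X_i1 + n *: 'X_i1 ^+ 2).

End Defs.

(* Main.v *)
Require Import Defs.
From HB Require Import structures.
From mathcomp Require Import all_boot all_order all_algebra.
From mathcomp Require Import mpoly.
Import Order.TTheory GRing.Theory Num.Theory.
Local Open Scope ring_scope.
Set Implicit Arguments. Unset Strict Implicit.
From mathcomp Require Import ring lra.

Definition mn (a b : nat) : 'X_{1..2} := [multinom (if i == i0 then a else b) | i < 2].
Definition L6 := [:: mn 0 0; mn 1 0; mn 0 1; mn 2 0; mn 1 1; mn 0 2].

Lemma mn0 a b : mn a b i0 = a. Proof. by rewrite mnmE. Qed.
Lemma mn1 a b : mn a b i1 = b. Proof. by rewrite mnmE. Qed.

Lemma I2_cases (i : 'I_2) : i = i0 \/ i = i1.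
Proof. case: i => [[|[|k]] Hk]; [left|right|]; try by apply/val_inj. by []. Qed.

Lemma mn_eta (m : 'X_{1..2}) : m = mn (m i0) (m i1).
Proof. apply/mnmP => i; case: (I2_cases i) => ->; by rewrite ?mn0 ?mn1. Qed.

Lemma eq_mn a b c d : (mn a b == mn c d) = (a == c) && (b == d).
Proof.
case: (eqVneq (mn a b) (mn c d)) => [E|NE].
  have h0 := congr1 (fun m : 'X_{1..2} => m i0) E.
  have h1 := congr1 (fun m : 'X_{1..2} => m i1) E.
  by rewrite /= !mn0 !mn1 in h0 h1; rewrite h0 h1 !eqxx.
by case: (eqVneq a c) => [ac|//]; case: (eqVneq b d) => [bd|//]; move: NE; rewrite ac bd eqxx.
Qed.

Lemma uniq_L6 : uniq L6.
Proof. by rewrite /= !inE !eq_mn. Qed.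

Lemma mdeg2 (m : 'X_{1..2}) : mdeg m = (m i0 + m i1)%N.
Proof. by rewrite mdegE !big_ord_recl big_ord0 addn0; congr (_ + _)%N; congr (m _); apply/val_inj. Qed.

Lemma in_L6 (m : 'X_{1..2}) : (mdeg m < 3)%N -> m \in L6.
Proof.
rewrite mdeg2 (mn_eta m); rewrite mn0 mn1.
case: (m i0) => [|[|[|a]]]; case: (m i1) => [|[|[|b]]] //= _;
  by rewrite !inE !eq_mn.
Qed.

Definition L1 := [:: mn 2 0; mn 1 1; mn 1 0; mn 0 2; mn 0 1; mn 0 0].
Definition L2 := [:: mn 0 2; mn 1 1; mn 0 1; mn 2 0; mn 1 0; mn 0 0].

Lemma cover_L (s : seq 'X_{1..2}) :
  all (fun ab => mn ab.1 ab.2 \in s)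
    [:: (0,0); (1,0); (0,1); (2,0); (1,1); (0,2)]%N ->
  forall m : 'X_{1..2}, (mdeg m < 3)%N -> m \in s.
Proof.
move=> hall m; rewrite mdeg2 (mn_eta m) mn0 mn1.
move: hall; case: (m i0) => [|[|[|a]]]; case: (m i1) => [|[|[|b]]] //;
  by move=> /allP H _; apply: (H (_, _)).
Qed.

Lemma sum_suppS (R : nzRingType) (V : lmodType R) (s : seq 'X_{1..2})
    (g : 'X_{1..2} -> V) (p : {mpoly R[2]}) :
  uniq s -> (forall m : 'X_{1..2}, (mdeg m < 3)%N -> m \in s) ->
  (msize p <= 3)%N ->
  \sum_(m <- msupp p) p@_m *: g m = \sum_(m <- s) p@_m *: g m.
Proof.
move=> us hs hp.
have pe : perm_eq (msupp p) [seq m <- s | m \in msupp p].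
  apply: uniq_perm; first exact: msupp_uniq.
    by rewrite filter_uniq.
  move=> m; rewrite mem_filter; case mp: (m \in msupp p) => //=.
  apply/esym; apply: hs; exact: leq_trans (msize_mdeg_lt mp) hp.
rewrite (perm_big _ pe) big_filter big_rmcond //= => m.
by move/memN_msupp_eq0 ->; rewrite scale0r.
Qed.

Lemma uniq_L1 : uniq L1. Proof. by rewrite /= !inE !eq_mn. Qed.
Lemma uniq_L2 : uniq L2. Proof. by rewrite /= !inE !eq_mn. Qed.
Lemma cov_L6 : forall m : 'X_{1..2}, (mdeg m < 3)%N -> m \in L6.
Proof. by apply: cover_L; rewrite /= !inE !eq_mn. Qed.
Lemma cov_L1 : forall m : 'X_{1..2}, (mdeg m < 3)%N -> m \in L1.
Proof. by apply: cover_L; rewrite /= !inE !eq_mn. Qed.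
Lemma cov_L2 : forall m : 'X_{1..2}, (mdeg m < 3)%N -> m \in L2.
Proof. by apply: cover_L; rewrite /= !inE !eq_mn. Qed.

Definition cf (R : nzRingType) (p : {mpoly R[2]}) a b := p@_(mn a b).
Ltac gencf := repeat match goal with |- context [cf ?p ?a ?b] => let c := fresh "c" in generalize (cf p a b) => c end.

Section Rep.

Variable R : realFieldType.
Implicit Types (p f g : {mpoly R[2]}) (x : 'cV[R]_2).
Notation X0 := ('X_i0 : {mpoly R[2]}).
Notation X1 := ('X_i1 : {mpoly R[2]}).

Lemma Xmn a b : 'X_[mn a b] = X0 ^+ a * X1 ^+ b.
Proof.
rewrite mpolyXE_id !big_ord_recl big_ord0 mulr1 -/i0.
have -> : lift ord0 (ord0 : 'I_1) = i1 by apply/val_inj.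
by rewrite mn0 mn1.
Qed.

Lemma reprE p : (msize p <= 3)%N ->
  p = cf p 0 0 *: 1 + cf p 1 0 *: X0 + cf p 0 1 *: X1 + cf p 2 0 *: (X0 * X0)
      + cf p 1 1 *: (X0 * X1) + cf p 0 2 *: (X1 * X1).
Proof.
move=> hp; rewrite {1}(mpolyE p) (sum_suppS (fun m => 'X_[m]) uniq_L6 cov_L6 hp).
rewrite /L6 !big_cons big_nil !Xmn /cf.
by rewrite !expr0 !expr1 !expr2 !mulr1 !mul1r !addrA addr0.
Qed.

Lemma homU1E p : (msize p <= 3)%N ->
  homU1 p = cf p 2 0 *: 1 + cf p 1 1 *: X0 + cf p 1 0 *: X1
      + cf p 0 2 *: (X0 * X0) + cf p 0 1 *: (X0 * X1) + cf p 0 0 *: (X1 * X1).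
Proof.
move=> hp; rewrite /homU1 (sum_suppS (fun m => 'X_i0 ^+ (m i1) * 'X_i1 ^+ (2 - (m i0 + m i1))) uniq_L1 cov_L1 hp).
rewrite /L1 !big_cons big_nil !mn0 !mn1 /cf /=.
by rewrite !expr0 !expr1 !expr2 !mulr1 !mul1r !addrA addr0.
Qed.

Lemma homU2E p : (msize p <= 3)%N ->
  homU2 p = cf p 0 2 *: 1 + cf p 1 1 *: X0 + cf p 0 1 *: X1
      + cf p 2 0 *: (X0 * X0) + cf p 1 0 *: (X0 * X1) + cf p 0 0 *: (X1 * X1).
Proof.
move=> hp; rewrite /homU2 (sum_suppS (fun m => 'X_i0 ^+ (m i0) * 'X_i1 ^+ (2 - (m i0 + m i1))) uniq_L2 cov_L2 hp).
rewrite /L2 !big_cons big_nil !mn0 !mn1 /cf /=.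
by rewrite !expr0 !expr1 !expr2 !mulr1 !mul1r !addrA addr0.
Qed.

Lemma dXE (i j : 'I_2) : ('X_i : {mpoly R[2]})^`M(j) = ((i == j)%:R : R) *: 1.
Proof.
rewrite mderivX mnm1E; case: eqP => [->|_].
  have -> : (U_(j) - U_(j) = 0)%MM by apply/mnmP => k; rewrite mnmBE mnm0E subnn.
  by rewrite mpolyX0.
by rewrite !scale0r.
Qed.

Lemma d1E (j : 'I_2) : (1 : {mpoly R[2]})^`M(j) = 0.
Proof. by rewrite -mpolyC1 mderivC. Qed.

Lemma i01 : (i0 == i1) = false. Proof. by []. Qed.
Lemma i10 : (i1 == i0) = false. Proof. by []. Qed.

Ltac dsimp := rewrite ?(mderivD, mderivB, mderivN, mderivZ, mderivM, dXE, d1E, eqxx, i01, i10).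
Ltac esimp := rewrite /evp ?(mevalD, mevalB, mevalN, mevalZ, mevalM, mevalXU, meval1, meval0).


Definition form (c00 c10 c01 c20 c11 c02 : R) : {mpoly R[2]} :=
  c00 *: 1 + c10 *: X0 + c01 *: X1 + c20 *: (X0 * X0) + c11 *: (X0 * X1) + c02 *: (X1 * X1).

Lemma meval_form c00 c10 c01 c20 c11 c02 (v : 'I_2 -> R) :
  (form c00 c10 c01 c20 c11 c02).@[v] =
  c00 + c10 * v i0 + c01 * v i1 + c20 * (v i0 * v i0) + c11 * (v i0 * v i1) + c02 * (v i1 * v i1).
Proof. by rewrite /form !mevalD !mevalZ !mevalM !mevalXU meval1 mulr1. Qed.

Lemma dform0 c00 c10 c01 c20 c11 c02 :
  (form c00 c10 c01 c20 c11 c02)^`M(i0) = form c10 (2 * c20) c11 0 0 0.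
Proof.
rewrite /form !mderivD !mderivZ !mderivM !dXE d1E eqxx i10 /=.
by rewrite -!mul_mpolyC; ring.
Qed.

Lemma dform1 c00 c10 c01 c20 c11 c02 :
  (form c00 c10 c01 c20 c11 c02)^`M(i1) = form c01 c11 (2 * c02) 0 0 0.
Proof.
rewrite /form !mderivD !mderivZ !mderivM !dXE d1E eqxx i01 /=.
by rewrite -!mul_mpolyC; ring.
Qed.

Lemma dX0M (f : {mpoly R[2]}) j : (X0 * f)^`M(j) = ((i0 == j)%:R : R) *: f + X0 * f^`M(j).
Proof. by rewrite mderivM dXE -!mul_mpolyC mulr1. Qed.
Lemma dX1M (f : {mpoly R[2]}) j : (X1 * f)^`M(j) = ((i1 == j)%:R : R) *: f + X1 * f^`M(j).
Proof. by rewrite mderivM dXE -!mul_mpolyC mulr1. Qed.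

Lemma reprF p : (msize p <= 3)%N ->
  p = form (cf p 0 0) (cf p 1 0) (cf p 0 1) (cf p 2 0) (cf p 1 1) (cf p 0 2).
Proof. exact: reprE. Qed.
Lemma homU1F p : (msize p <= 3)%N ->
  homU1 p = form (cf p 2 0) (cf p 1 1) (cf p 1 0) (cf p 0 2) (cf p 0 1) (cf p 0 0).
Proof. exact: homU1E. Qed.
Lemma homU2F p : (msize p <= 3)%N ->
  homU2 p = form (cf p 0 2) (cf p 1 1) (cf p 0 1) (cf p 2 0) (cf p 1 0) (cf p 0 0).
Proof. exact: homU2E. Qed.


Lemma pt2_0 (a b : R) : pt2 a b i0 0 = a. Proof. by rewrite mxE eqxx. Qed.
Lemma pt2_1 (a b : R) : pt2 a b i1 0 = b. Proof. by rewrite mxE i10. Qed.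

Lemma evpE p x : (msize p <= 3)%N ->
  evp p x = cf p 0 0 + cf p 1 0 * x i0 0 + cf p 0 1 * x i1 0 + cf p 2 0 * (x i0 0 * x i0 0)
      + cf p 1 1 * (x i0 0 * x i1 0) + cf p 0 2 * (x i1 0 * x i1 0).
Proof. by move=> hp; rewrite /evp {1}(reprF hp) meval_form. Qed.

Lemma evpD0 p x : (msize p <= 3)%N ->
  evp (p^`M(i0)) x = cf p 1 0 + 2 * cf p 2 0 * x i0 0 + cf p 1 1 * x i1 0.
Proof. by move=> hp; rewrite /evp {1}(reprF hp) dform0 meval_form; gencf; ring. Qed.

Lemma evpD1 p x : (msize p <= 3)%N ->
  evp (p^`M(i1)) x = cf p 0 1 + cf p 1 1 * x i0 0 + 2 * cf p 0 2 * x i1 0.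
Proof. by move=> hp; rewrite /evp {1}(reprF hp) dform1 meval_form; gencf; ring. Qed.

Lemma evpDD p x j k : (msize p <= 3)%N ->
  evp ((p^`M(j))^`M(k)) x =
  if j == i0 then (if k == i0 then 2 * cf p 2 0 else cf p 1 1)
  else (if k == i0 then cf p 1 1 else 2 * cf p 0 2).
Proof.
move=> hp; rewrite /evp {1}(reprF hp).
case: (I2_cases j) => ->; case: (I2_cases k) => ->;
  rewrite ?(dform0, dform1) meval_form ?eqxx ?i01 ?i10 /=; gencf; ring.
Qed.


Lemma evpB f g x : evp (f - g) x = evp f x - evp g x. Proof. exact: mevalB. Qed.
Lemma evpN f x : evp (- f) x = - evp f x. Proof. exact: mevalN. Qed.
Lemma evp_form c00 c10 c01 c20 c11 c02 x :
  evp (form c00 c10 c01 c20 c11 c02) x =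
  c00 + c10 * x i0 0 + c01 * x i1 0 + c20 * (x i0 0 * x i0 0) + c11 * (x i0 0 * x i1 0)
  + c02 * (x i1 0 * x i1 0).
Proof. exact: meval_form. Qed.
Lemma evp_dform0 c00 c10 c01 c20 c11 c02 x :
  evp ((form c00 c10 c01 c20 c11 c02)^`M(i0)) x = c10 + 2 * c20 * x i0 0 + c11 * x i1 0.
Proof. by rewrite dform0 evp_form; ring. Qed.
Lemma evp_dform1 c00 c10 c01 c20 c11 c02 x :
  evp ((form c00 c10 c01 c20 c11 c02)^`M(i1)) x = c01 + c11 * x i0 0 + 2 * c02 * x i1 0.
Proof. by rewrite dform1 evp_form; ring. Qed.
Lemma evpX0M g x : evp (X0 * g) x = x i0 0 * evp g x.
Proof. by rewrite /evp mevalM mevalXU. Qed.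
Lemma evpX1M g x : evp (X1 * g) x = x i1 0 * evp g x.
Proof. by rewrite /evp mevalM mevalXU. Qed.
Lemma evpdX0M0 g x : evp ((X0 * g)^`M(i0)) x = evp g x + x i0 0 * evp (g^`M(i0)) x.
Proof. by rewrite dX0M /evp mevalD mevalZ mevalM mevalXU eqxx mul1r. Qed.
Lemma evpdX1M0 g x : evp ((X1 * g)^`M(i0)) x = x i1 0 * evp (g^`M(i0)) x.
Proof. by rewrite dX1M /evp mevalD mevalZ mevalM mevalXU i10 mul0r add0r. Qed.
Lemma evpdX1M1 g x : evp ((X1 * g)^`M(i1)) x = evp g x + x i1 0 * evp (g^`M(i1)) x.
Proof. by rewrite dX1M /evp mevalD mevalZ mevalM mevalXU eqxx mul1r. Qed.

Lemma U1vals (P Q : {mpoly R[2]}) (u : R) : (msize P <= 3)%N -> (msize Q <= 3)%N ->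
  [/\ evp (chartU1 P Q i0) (pt2 u 0) =
        cf Q 2 0 + cf Q 1 1 * u + cf Q 0 2 * (u * u) - u * (cf P 2 0 + cf P 1 1 * u + cf P 0 2 * (u * u)),
      evp ((chartU1 P Q i0)^`M(i0)) (pt2 u 0) =
        cf Q 1 1 + 2 * cf Q 0 2 * u - (cf P 2 0 + cf P 1 1 * u + cf P 0 2 * (u * u))
          - u * (cf P 1 1 + 2 * cf P 0 2 * u),
      evp ((chartU1 P Q i1)^`M(i0)) (pt2 u 0) = 0 &
      evp ((chartU1 P Q i1)^`M(i1)) (pt2 u 0) = - (cf P 2 0 + cf P 1 1 * u + cf P 0 2 * (u * u))].
Proof.
move=> hP hQ; rewrite /chartU1 /mkvf eqxx i10 (homU1F hP) (homU1F hQ).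
split.
- by rewrite evpB evpX0M !evp_form pt2_0 pt2_1; gencf; ring.
- by rewrite mderivB evpB evpdX0M0 !evp_dform0 !evp_form pt2_0 pt2_1; gencf; ring.
- by rewrite mderivN evpN evpdX1M0 !evp_dform0 ?evp_form pt2_0 pt2_1; gencf; ring.
- by rewrite mderivN evpN evpdX1M1 !evp_dform1 !evp_form pt2_0 pt2_1; gencf; ring.
Qed.

Lemma U2vals (P Q : {mpoly R[2]}) : (msize P <= 3)%N -> (msize Q <= 3)%N ->
  [/\ evp (chartU2 P Q i0) (pt2 0 0) = cf P 0 2,
      evp ((chartU2 P Q i0)^`M(i0)) (pt2 0 0) = cf P 1 1 - cf Q 0 2,
      evp ((chartU2 P Q i1)^`M(i0)) (pt2 0 0) = 0 &
      evp ((chartU2 P Q i1)^`M(i1)) (pt2 0 0) = - cf Q 0 2].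
Proof.
move=> hP hQ; rewrite /chartU2 /mkvf eqxx i10 (homU2F hP) (homU2F hQ).
split.
- by rewrite evpB evpX0M !evp_form pt2_0 pt2_1; gencf; ring.
- by rewrite mderivB evpB evpdX0M0 !evp_dform0 !evp_form pt2_0 pt2_1; gencf; ring.
- by rewrite mderivN evpN evpdX1M0 !evp_dform0 ?evp_form pt2_0 pt2_1; gencf; ring.
- by rewrite mderivN evpN evpdX1M1 !evp_dform1 !evp_form pt2_0 pt2_1; gencf; ring.
Qed.
End Rep.

Section Core.
Variable R : realFieldType.

Lemma quad_expand (a b c y0 y1 s0 s1 p0 p1 z0 z1 : R) :
  y0 = s0 * z0 + p0 * z1 -> y1 = s1 * z0 + p1 * z1 ->
  a * y0 * y0 + b * y0 * y1 + c * y1 * y1 =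
  z0 * z0 * (a * s0 * s0 + b * s0 * s1 + c * s1 * s1) +
  z0 * z1 * (2 * a * s0 * p0 + b * (s0 * p1 + s1 * p0) + 2 * c * s1 * p1) +
  z1 * z1 * (a * p0 * p0 + b * p0 * p1 + c * p1 * p1).
Proof. by move=> -> ->; ring. Qed.

Lemma omega_ne0 (j11 j12 j21 j22 v0 v1 w0 w1 : R) :
  j11 + j22 != 0 ->
  (v0 != 0) || (v1 != 0) -> j11 * v0 + j12 * v1 = 0 -> j21 * v0 + j22 * v1 = 0 ->
  (w0 != 0) || (w1 != 0) -> w0 * j11 + w1 * j21 = 0 -> w0 * j12 + w1 * j22 = 0 ->
  w0 * v0 + w1 * v1 != 0.
Proof.
move=> hl hv hv1 hv2 hw hw1 hw2; apply/negP => /eqP ho.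
have e1 : (j11+j22) * (v0 * w1) = 0.
  have -> : (j11+j22) * (v0 * w1) = w1 * (j11 * v0 + j12 * v1) + v0 * (w0 * j12 + w1 * j22) - j12 * (w0 * v0+w1 * v1) by ring.
  by rewrite hv1 hw2 ho; ring.
have e2 : (j11+j22) * (v1 * w0) = 0.
  have -> : (j11+j22) * (v1 * w0) = w0 * (j21 * v0 + j22 * v1) + v1 * (w0 * j11 + w1 * j21) - j21 * (w0 * v0+w1 * v1) by ring.
  by rewrite hv2 hw1 ho; ring.
have e3 : (j11+j22) * (v0 * w0) = 0.
  have -> : (j11+j22) * (v0 * w0) = w0 * (j11 * v0 + j12 * v1) + j22 * (w0 * v0+w1 * v1) - v1 * (w0 * j12 + w1 * j22) by ring.
  by rewrite hv1 hw2 ho; ring.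
have e4 : (j11+j22) * (v1 * w1) = 0.
  have -> : (j11+j22) * (v1 * w1) = j11 * (w0 * v0+w1 * v1) + w1 * (j21 * v0 + j22 * v1) - v0 * (w0 * j11 + w1 * j21) by ring.
  by rewrite hv2 hw1 ho; ring.
move: e1 e2 e3 e4 => /eqP e1 /eqP e2 /eqP e3 /eqP e4.
move: e1 e2 e3 e4; rewrite !mulf_eq0 (negbTE hl) /=.
by case/orP: hv => /negbTE -> ; case/orP: hw => /negbTE -> //=; rewrite ?orbF.
Qed.

Lemma core (j11 j12 j21 j22 a1 b1 c1 a2 b2 c2 v0 v1 w0 w1 : R) :
  j11 + j22 != 0 ->
  (v0 != 0) || (v1 != 0) -> j11 * v0 + j12 * v1 = 0 -> j21 * v0 + j22 * v1 = 0 ->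
  (w0 != 0) || (w1 != 0) -> w0 * j11 + w1 * j21 = 0 -> w0 * j12 + w1 * j22 = 0 ->
  w0 * (a1 * v0 * v0 + b1 * v0 * v1 + c1 * v1 * v1)
    + w1 * (a2 * v0 * v0 + b2 * v0 * v1 + c2 * v1 * v1) != 0 ->
  v0 * (a2 * v0 * v0 + b2 * v0 * v1 + c2 * v1 * v1)
    - v1 * (a1 * v0 * v0 + b1 * v0 * v1 + c1 * v1 * v1) = 0 ->
  v0 * (2 * a2 * v0 * (- w1) + b2 * (v0 * w0 + v1 * (- w1)) + 2 * c2 * v1 * w0)
   - v1 * (2 * a1 * v0 * (- w1) + b1 * (v0 * w0 + v1 * (- w1)) + 2 * c1 * v1 * w0)
   = w0 * (a1 * v0 * v0 + b1 * v0 * v1 + c1 * v1 * v1)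
    + w1 * (a2 * v0 * v0 + b2 * v0 * v1 + c2 * v1 * v1) ->
  exists a11 a12 a21 a22 c h k n : R,
    a11 * a22 - a12 * a21 != 0 /\ c != 0 /\
    forall y0 y1 : R,
      c * (a11 * (j11 * y0 + j12 * y1 + (a1 * y0 * y0 + b1 * y0 * y1 + c1 * y1 * y1))
         + a12 * (j21 * y0 + j22 * y1 + (a2 * y0 * y0 + b2 * y0 * y1 + c2 * y1 * y1)))
      = (a11 * y0 + a12 * y1) * (a11 * y0 + a12 * y1)
        + 2 * h * (a11 * y0 + a12 * y1) * (a21 * y0 + a22 * y1)
        + k * (a21 * y0 + a22 * y1) * (a21 * y0 + a22 * y1) /\
      c * (a21 * (j11 * y0 + j12 * y1 + (a1 * y0 * y0 + b1 * y0 * y1 + c1 * y1 * y1))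
         + a22 * (j21 * y0 + j22 * y1 + (a2 * y0 * y0 + b2 * y0 * y1 + c2 * y1 * y1)))
      = (a21 * y0 + a22 * y1)
        + (a11 * y0 + a12 * y1) * (a21 * y0 + a22 * y1)
        + n * (a21 * y0 + a22 * y1) * (a21 * y0 + a22 * y1).
Proof.
move=> hl hv hv1 hv2 hw hw1 hw2 hmu hinf hK.
have ho := @omega_ne0 j11 j12 j21 j22 v0 v1 w0 w1 hl hv hv1 hv2 hw hw1 hw2.
set om := (w0 * v0 + w1 * v1) in ho *.
set lam := (j11 + j22) in hl *.
set mu := (w0 * _ + w1 * _) in hmu hK *.
set s := lam * om / mu.
set t := mu / (lam * om * om).
set ka := 1 / om.
set s0 := s * v0. set s1 := s * v1.
pose al i := (if i then a1 * s0 * s0 + b1 * s0 * s1 + c1 * s1 * s1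
                   else a2 * s0 * s0 + b2 * s0 * s1 + c2 * s1 * s1).
pose be (a b c : R) := 2 * a * s0 * (- w1) + b * (s0 * w0 + s1 * (- w1)) + 2 * c * s1 * w0.
pose ga (a b c : R) := a * (- w1) * (- w1) + b * (- w1) * w0 + c * w0 * w0.
exists (t * w0), (t * w1), (- (ka * v1)), (ka * v0), (1 / lam),
  (1 / lam * t * (w0 * be a1 b1 c1 + w1 * be a2 b2 c2) / 2),
  (1 / lam * t * (w0 * ga a1 b1 c1 + w1 * ga a2 b2 c2)),
  (1 / lam * ka * (v0 * ga a2 b2 c2 - v1 * ga a1 b1 c1)).
have hmu' : mu != 0 by [].
split.
  have -> : t * w0 * (ka * v0) - t * w1 * - (ka * v1) = t * ka * om by rewrite /om; ring.
  rewrite /t /ka; apply: mulf_neq0 => //; apply: mulf_neq0.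
    by apply: mulf_neq0 => //; rewrite invr_neq0 // !mulf_neq0.
  by rewrite div1r invr_neq0.
split; first by rewrite div1r invr_neq0.
move=> y0 y1.
set z0 := t * w0 * y0 + t * w1 * y1.
set z1 := - (ka * v1) * y0 + ka * v0 * y1.
have st : s * t = 1 / om by rewrite /s /t; field; rewrite hl ho hmu.
have Ey0 : y0 = s0 * z0 + (- w1) * z1.
  rewrite /s0 /z0 /z1 /ka.
  have -> : s * v0 * (t * w0 * y0 + t * w1 * y1) = (s * t) * v0 * (w0 * y0 + w1 * y1) by ring.
  rewrite st /om; field; exact: ho.
have Ey1 : y1 = s1 * z0 + w0 * z1.
  rewrite /s1 /z0 /z1 /ka.
  have -> : s * v1 * (t * w0 * y0 + t * w1 * y1) = (s * t) * v1 * (w0 * y0 + w1 * y1) by ring.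
  rewrite st /om; field; exact: ho.
rewrite !(@quad_expand _ _ _ _ _ _ _ _ _ _ _ Ey0 Ey1).
clearbody z0 z1; subst y0 y1.
have hmuE : mu = w0 * (a1 * v0 * v0 + b1 * v0 * v1 + c1 * v1 * v1)
    + w1 * (a2 * v0 * v0 + b2 * v0 * v1 + c2 * v1 * v1) by [].
split.
  have e1 : 1 / lam * t * (w0 * al true + w1 * al false) = 1.
    transitivity (1 / lam * t * s * s * mu).
      by rewrite hmuE /al /s0 /s1; ring.
    by rewrite /t /s; field; rewrite hl ho hmu.
  transitivity (1 / lam * t * ((w0 * j11 + w1 * j21) * (s0 * z0 + - w1 * z1)
      + (w0 * j12 + w1 * j22) * (s1 * z0 + w0 * z1))
      + z0 * z0 * (1 / lam * t * (w0 * al true + w1 * al false))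
      + 2 * (1 / lam * t * (w0 * be a1 b1 c1 + w1 * be a2 b2 c2) / 2) * z0 * z1
      + (1 / lam * t * (w0 * ga a1 b1 c1 + w1 * ga a2 b2 c2)) * z1 * z1).
    have two : (2:R) != 0 by rewrite pnatr_eq0.
    by rewrite /al /be /ga; field.
  by rewrite hw1 hw2 e1; ring.
have c2a : v0 * al false - v1 * al true = 0.
  transitivity (s * s * (v0 * (a2 * v0 * v0 + b2 * v0 * v1 + c2 * v1 * v1)
    - v1 * (a1 * v0 * v0 + b1 * v0 * v1 + c1 * v1 * v1))).
    by rewrite /al /s0 /s1; ring.
  by rewrite hinf mulr0.
have c2b : 1 / lam * ka * (v0 * be a2 b2 c2 - v1 * be a1 b1 c1) = 1.
  transitivity (1 / lam * ka * s * mu).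
    by rewrite -hK /be /s0 /s1; ring.
  by rewrite /ka /s; field; rewrite hl ho hmu.
have kaom : ka * om = 1 by rewrite /ka; field.
transitivity (1 / lam * ka * ((j21 * v0 + j22 * v1) * (s0 * z0 + - w1 * z1)
     - (j11 * v0 + j12 * v1) * (s1 * z0 + w0 * z1))
   + ka * om * z1
   + z0 * z0 * (1 / lam * ka * (v0 * al false - v1 * al true))
   + z0 * z1 * (1 / lam * ka * (v0 * be a2 b2 c2 - v1 * be a1 b1 c1))
   + (1 / lam * ka * (v0 * ga a2 b2 c2 - v1 * ga a1 b1 c1)) * z1 * z1).
  rewrite /al /be /ga /om /s0 /s1 /lam; field; exact: hl.
by rewrite hv1 hv2 c2a c2b kaom; ring.
Qed.

Lemma chart1 (a1 b1 c1 a2 b2 c2 v0 v1 w0 w1 : R) : v0 != 0 ->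
  a2 + b2 * (v1 / v0) + c2 * ((v1 / v0) * (v1 / v0))
    - (v1 / v0) * (a1 + b1 * (v1 / v0) + c1 * ((v1 / v0) * (v1 / v0))) = 0 ->
  (b2 + 2 * c2 * (v1 / v0) - (a1 + b1 * (v1 / v0) + c1 * ((v1 / v0) * (v1 / v0)))
     - (v1 / v0) * (b1 + 2 * c1 * (v1 / v0)))
   * (- (a1 + b1 * (v1 / v0) + c1 * ((v1 / v0) * (v1 / v0)))) = 0 ->
  w0 * (a1 * v0 * v0 + b1 * v0 * v1 + c1 * v1 * v1)
    + w1 * (a2 * v0 * v0 + b2 * v0 * v1 + c2 * v1 * v1) != 0 ->
  v0 * (a2 * v0 * v0 + b2 * v0 * v1 + c2 * v1 * v1)
    - v1 * (a1 * v0 * v0 + b1 * v0 * v1 + c1 * v1 * v1) = 0 /\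
  v0 * (2 * a2 * v0 * (- w1) + b2 * (v0 * w0 + v1 * (- w1)) + 2 * c2 * v1 * w0)
   - v1 * (2 * a1 * v0 * (- w1) + b1 * (v0 * w0 + v1 * (- w1)) + 2 * c1 * v1 * w0)
   = w0 * (a1 * v0 * v0 + b1 * v0 * v1 + c1 * v1 * v1)
    + w1 * (a2 * v0 * v0 + b2 * v0 * v1 + c2 * v1 * v1).
Proof.
move=> hv0 hs hd hmu.
set u := v1 / v0 in hs hd.
have H1 : v0 * (a2 * v0 * v0 + b2 * v0 * v1 + c2 * v1 * v1)
    - v1 * (a1 * v0 * v0 + b1 * v0 * v1 + c1 * v1 * v1) = 0.
  transitivity (v0 * v0 * v0 * (a2 + b2 * u + c2 * (u * u) - u * (a1 + b1 * u + c1 * (u * u)))).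
    by rewrite /u; field.
  by rewrite hs !mulr0.
split => //.
have hH : a1 + b1 * u + c1 * (u * u) != 0.
  apply/negP => /eqP h0; move: hmu; apply/negP; rewrite negbK.
  have e1 : a1 * v0 * v0 + b1 * v0 * v1 + c1 * v1 * v1 = 0.
    transitivity (v0 * v0 * (a1 + b1 * u + c1 * (u * u))); first by rewrite /u; field.
    by rewrite h0 mulr0.
  have e2 : a2 * v0 * v0 + b2 * v0 * v1 + c2 * v1 * v1 = 0.
    move: H1; rewrite e1 mulr0 subr0 => /eqP; rewrite mulf_eq0 (negbTE hv0) /=.
    by move/eqP.
  by rewrite e1 e2 !mulr0 addr0.
have hD : b2 + 2 * c2 * u - (a1 + b1 * u + c1 * (u * u)) - u * (b1 + 2 * c1 * u) = 0.
  move/eqP: hd; rewrite mulf_eq0 oppr_eq0 (negbTE hH) orbF; by move/eqP.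
have K : b2 * v0 * v0 + 2 * c2 * v0 * v1 - a1 * v0 * v0 - 2 * b1 * v0 * v1 - 3 * c1 * v1 * v1 = 0.
  transitivity (v0 * v0 * (b2 + 2 * c2 * u - (a1 + b1 * u + c1 * (u * u)) - u * (b1 + 2 * c1 * u))).
    by rewrite /u; field.
  by rewrite hD mulr0.
apply/eqP; rewrite -subr_eq0; apply/eqP.
apply: (mulfI hv0); rewrite mulr0.
transitivity ((v0 * w0 + v1 * w1) * (b2 * v0 * v0 + 2 * c2 * v0 * v1 - a1 * v0 * v0 - 2 * b1 * v0 * v1 - 3 * c1 * v1 * v1)
   - 3 * w1 * (v0 * (a2 * v0 * v0 + b2 * v0 * v1 + c2 * v1 * v1)
    - v1 * (a1 * v0 * v0 + b1 * v0 * v1 + c1 * v1 * v1))); first by ring.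
by rewrite K H1; ring.
Qed.

Lemma chart2 (a1 b1 c1 a2 b2 c2 v0 v1 w0 w1 : R) : v0 = 0 -> v1 != 0 ->
  c1 = 0 -> (b1 - c2) * (- c2) = 0 ->
  w0 * (a1 * v0 * v0 + b1 * v0 * v1 + c1 * v1 * v1)
    + w1 * (a2 * v0 * v0 + b2 * v0 * v1 + c2 * v1 * v1) != 0 ->
  v0 * (a2 * v0 * v0 + b2 * v0 * v1 + c2 * v1 * v1)
    - v1 * (a1 * v0 * v0 + b1 * v0 * v1 + c1 * v1 * v1) = 0 /\
  v0 * (2 * a2 * v0 * (- w1) + b2 * (v0 * w0 + v1 * (- w1)) + 2 * c2 * v1 * w0)
   - v1 * (2 * a1 * v0 * (- w1) + b1 * (v0 * w0 + v1 * (- w1)) + 2 * c1 * v1 * w0)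
   = w0 * (a1 * v0 * v0 + b1 * v0 * v1 + c1 * v1 * v1)
    + w1 * (a2 * v0 * v0 + b2 * v0 * v1 + c2 * v1 * v1).
Proof.
move=> -> hv1 -> hd hmu.
split; first by ring.
have hc2 : c2 != 0.
  apply/negP => /eqP h0; move: hmu; rewrite h0; apply/negP; rewrite negbK; apply/eqP; ring.
have hb : b1 = c2.
  move/eqP: hd; rewrite mulf_eq0 oppr_eq0 (negbTE hc2) orbF subr_eq0; by move/eqP.
by rewrite hb; ring.
Qed.

Lemma ker_par (j11 j12 j21 j22 v0 v1 u0 u1 a1 b1 c1 a2 b2 c2 w0 w1 : R) :
  j11 + j22 != 0 -> (v0 != 0) || (v1 != 0) ->
  j11 * v0 + j12 * v1 = 0 -> j21 * v0 + j22 * v1 = 0 ->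
  j11 * u0 + j12 * u1 = 0 -> j21 * u0 + j22 * u1 = 0 ->
  w0 * (a1 * u0 * u0 + b1 * u0 * u1 + c1 * u1 * u1)
    + w1 * (a2 * u0 * u0 + b2 * u0 * u1 + c2 * u1 * u1) != 0 ->
  w0 * (a1 * v0 * v0 + b1 * v0 * v1 + c1 * v1 * v1)
    + w1 * (a2 * v0 * v0 + b2 * v0 * v1 + c2 * v1 * v1) != 0.
Proof.
move=> hl hv hv1 hv2 hu1 hu2 hmu.
pose phi (x y : R) := w0 * (a1 * x * x + b1 * x * y + c1 * y * y)
    + w1 * (a2 * x * x + b2 * x * y + c2 * y * y).
have cr : v0 * u1 - v1 * u0 = 0.
  have e : (j11 + j22) * (v0 * u1 - v1 * u0) = 0.
    transitivity (u1 * (j11 * v0 + j12 * v1) - v1 * (j11 * u0 + j12 * u1)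
       + v0 * (j21 * u0 + j22 * u1) - u0 * (j21 * v0 + j22 * v1)); first by ring.
    by rewrite hv1 hv2 hu1 hu2; ring.
  by move/eqP: e; rewrite mulf_eq0 (negbTE hl) /= => /eqP.
have e0 : v0 * u1 = v1 * u0 by apply/eqP; rewrite -subr_eq0 cr.
have h0 : v0 * v0 * phi u0 u1 = u0 * u0 * phi v0 v1.
  transitivity (phi (v0 * u0) (v0 * u1)); first by rewrite /phi; ring.
  by rewrite e0 /phi; ring.
have h1 : v1 * v1 * phi u0 u1 = u1 * u1 * phi v0 v1.
  transitivity (phi (v1 * u0) (v1 * u1)); first by rewrite /phi; ring.
  by rewrite -e0 /phi; ring.
apply/negP => /eqP hz.
have hz' : phi v0 v1 = 0 by [].
rewrite hz' !mulr0 in h0 h1.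
move: hmu; rewrite -/(phi u0 u1); apply/negP; rewrite negbK.
case/orP: hv => hvi.
  by move/eqP: h0; rewrite !mulf_eq0 (negbTE hvi) /=.
by move/eqP: h1; rewrite !mulf_eq0 (negbTE hvi) /=.
Qed.
End Core.

Lemma det2 (R : comNzRingType) (A : 'M[R]_2) :
  \det A = A ord0 ord0 * A ord_max ord_max - A ord0 ord_max * A ord_max ord0.
Proof.
rewrite (expand_det_row _ ord0) !big_ord_recl big_ord0 /cofactor /=.
rewrite !det_mx11 !mxE /= addr0.
have -> : lift ord0 (0 : 'I_1) = ord_max by apply/val_inj.
have -> : lift (ord_max : 'I_2) (0 : 'I_1) = ord0 by apply/val_inj.
by rewrite expr0 mul1r /= expr1 mulN1r mulrN.
Qed.
Lemma tr2 (R : comNzRingType) (A : 'M[R]_2) :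
  \tr A = A ord0 ord0 + A ord_max ord_max.
Proof. rewrite /mxtrace !big_ord_recl big_ord0 addr0 /=.
have -> : lift ord0 (ord0 : 'I_1) = ord_max :> 'I_2 by apply/val_inj. by []. Qed.


Section Main.
Variable R : realFieldType.

Lemma sum2 (F : 'I_2 -> R) : \sum_(i < 2) F i = F i0 + F i1.
Proof.
rewrite !big_ord_recl big_ord0 addr0.
have -> : lift ord0 (ord0 : 'I_1) = i1 by apply/val_inj.
by [].
Qed.

Lemma mulmxE2 (A : 'M[R]_2) (u : 'cV[R]_2) i :
  (A *m u) i 0 = A i i0 * u i0 0 + A i i1 * u i1 0.
Proof. by rewrite mxE sum2. Qed.

Lemma trmulE2 (w : 'cV[R]_2) (A : 'M[R]_2) j :
  (w^T *m A) 0 j = w i0 0 * A i0 j + w i1 0 * A i1 j.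
Proof. by rewrite mxE sum2 !mxE. Qed.

Lemma cV2_nz (v : 'cV[R]_2) : v != 0 -> (v i0 0 != 0) || (v i1 0 != 0).
Proof.
apply: contraR; rewrite negb_or !negbK => /andP [/eqP h0 /eqP h1].
apply/eqP/matrixP => i j; rewrite (ord1 j) mxE.
by case: (I2_cases i) => ->.
Qed.

Lemma evfE (F : vfield R) x i : evf F x i 0 = evp (F i) x.
Proof. by rewrite mxE. Qed.

Lemma jacE (F : vfield R) r i j : jac F r i j = evp ((F i)^`M(j)) r.
Proof. by rewrite mxE. Qed.

Lemma mkvf0 (P Q : {mpoly R[2]}) : mkvf P Q i0 = P.
Proof. by rewrite /mkvf eqxx. Qed.
Lemma mkvf1 (P Q : {mpoly R[2]}) : mkvf P Q i1 = Q.
Proof. by rewrite /mkvf i10. Qed.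

Lemma evp_nf0 h k n (z : 'cV[R]_2) :
  evp (normal_form h k n i0) z = z i0 0 * z i0 0 + 2 * h * (z i0 0 * z i1 0) + k * (z i1 0 * z i1 0).
Proof.
rewrite /normal_form mkvf0 /evp !expr2 !mevalD !mevalZ !mevalM !mevalXU /=.
by [].
Qed.

Lemma evp_nf1 h k n (z : 'cV[R]_2) :
  evp (normal_form h k n i1) z = z i1 0 + z i0 0 * z i1 0 + n * (z i1 0 * z i1 0).
Proof.
rewrite /normal_form mkvf1 /evp !expr2 !mevalD !mevalZ !mevalM !mevalXU /=.
by [].
Qed.
End Main.

Theorem proposition2p2 (R : realFieldType) (P Q : {mpoly R[2]}) :
  quadratic_system P Q ->
  (exists r v : 'cV[R]_2,
     finite_double_saddle_node (mkvf P Q) r /\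
     null_eigvec (mkvf P Q) r v /\
     infinite_saddle_node_02 (infinite_point_in_direction P Q v).1
                             (infinite_point_in_direction P Q v).2) ->
  exists (A : 'M[R]_2) (b : 'cV[R]_2) (c h k n : R),
    A \in unitmx /\ c != 0 /\
    forall x : 'cV[R]_2,
      c *: (A *m evf (mkvf P Q) x) = evf (normal_form h k n) (A *m x + b).
Proof.
move=> hq [r [v [hfd [[hvnz hJv] hinf]]]].
have hP : (msize P <= 3)%N by rewrite -hq leq_maxl.
have hQ : (msize Q <= 3)%N by rewrite -hq leq_maxr.
case: hfd => [[hsing [hdet htr]] [v' [w [[hv'nz hJv'] [hwnz [hwJ hsec]]]]]].
have J00 : jac (mkvf P Q) r i0 i0 = cf P 1 0 + 2 * cf P 2 0 * r i0 0 + cf P 1 1 * r i1 0.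
  by rewrite jacE mkvf0 evpD0.
have J01 : jac (mkvf P Q) r i0 i1 = cf P 0 1 + cf P 1 1 * r i0 0 + 2 * cf P 0 2 * r i1 0.
  by rewrite jacE mkvf0 evpD1.
have J10 : jac (mkvf P Q) r i1 i0 = cf Q 1 0 + 2 * cf Q 2 0 * r i0 0 + cf Q 1 1 * r i1 0.
  by rewrite jacE mkvf1 evpD0.
have J11 : jac (mkvf P Q) r i1 i1 = cf Q 0 1 + cf Q 1 1 * r i0 0 + 2 * cf Q 0 2 * r i1 0.
  by rewrite jacE mkvf1 evpD1.
have hl : jac (mkvf P Q) r i0 i0 + jac (mkvf P Q) r i1 i1 != 0 by rewrite -tr2.
have hv := cV2_nz hvnz.
have hw := cV2_nz hwnz.
have hv'0 := cV2_nz hv'nz.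
have hv1 : jac (mkvf P Q) r i0 i0 * v i0 0 + jac (mkvf P Q) r i0 i1 * v i1 0 = 0.
  by rewrite -mulmxE2 hJv mxE.
have hv2 : jac (mkvf P Q) r i1 i0 * v i0 0 + jac (mkvf P Q) r i1 i1 * v i1 0 = 0.
  by rewrite -mulmxE2 hJv mxE.
have hu1 : jac (mkvf P Q) r i0 i0 * v' i0 0 + jac (mkvf P Q) r i0 i1 * v' i1 0 = 0.
  by rewrite -mulmxE2 hJv' mxE.
have hu2 : jac (mkvf P Q) r i1 i0 * v' i0 0 + jac (mkvf P Q) r i1 i1 * v' i1 0 = 0.
  by rewrite -mulmxE2 hJv' mxE.
have hw1 : w i0 0 * jac (mkvf P Q) r i0 i0 + w i1 0 * jac (mkvf P Q) r i1 i0 = 0.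
  by rewrite -trmulE2 hwJ mxE.
have hw2 : w i0 0 * jac (mkvf P Q) r i0 i1 + w i1 0 * jac (mkvf P Q) r i1 i1 = 0.
  by rewrite -trmulE2 hwJ mxE.
have hmu' : w i0 0 * (cf P 2 0 * v' i0 0 * v' i0 0 + cf P 1 1 * v' i0 0 * v' i1 0 + cf P 0 2 * v' i1 0 * v' i1 0)
   + w i1 0 * (cf Q 2 0 * v' i0 0 * v' i0 0 + cf Q 1 1 * v' i0 0 * v' i1 0 + cf Q 0 2 * v' i1 0 * v' i1 0) != 0.
  move: hsec; rewrite /second_order_term !sum2 mkvf0 mkvf1 !evpDD // ?eqxx ?i01 ?i10 /=.
  apply: contra => /eqP e; apply/eqP.
  transitivity (2 * (w i0 0 * (cf P 2 0 * v' i0 0 * v' i0 0 + cf P 1 1 * v' i0 0 * v' i1 0 + cf P 0 2 * v' i1 0 * v' i1 0)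
   + w i1 0 * (cf Q 2 0 * v' i0 0 * v' i0 0 + cf Q 1 1 * v' i0 0 * v' i1 0 + cf Q 0 2 * v' i1 0 * v' i1 0))).
    by gencf; ring.
  by rewrite e mulr0.
have hmu := ker_par hl hv hv1 hv2 hu1 hu2 hmu'.
have [hinf1 hK] : v i0 0 * (cf Q 2 0 * v i0 0 * v i0 0 + cf Q 1 1 * v i0 0 * v i1 0 + cf Q 0 2 * v i1 0 * v i1 0)
    - v i1 0 * (cf P 2 0 * v i0 0 * v i0 0 + cf P 1 1 * v i0 0 * v i1 0 + cf P 0 2 * v i1 0 * v i1 0) = 0 /\
  v i0 0 * (2 * cf Q 2 0 * v i0 0 * (- w i1 0) + cf Q 1 1 * (v i0 0 * w i0 0 + v i1 0 * (- w i1 0))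
            + 2 * cf Q 0 2 * v i1 0 * w i0 0)
   - v i1 0 * (2 * cf P 2 0 * v i0 0 * (- w i1 0) + cf P 1 1 * (v i0 0 * w i0 0 + v i1 0 * (- w i1 0))
            + 2 * cf P 0 2 * v i1 0 * w i0 0)
   = w i0 0 * (cf P 2 0 * v i0 0 * v i0 0 + cf P 1 1 * v i0 0 * v i1 0 + cf P 0 2 * v i1 0 * v i1 0)
    + w i1 0 * (cf Q 2 0 * v i0 0 * v i0 0 + cf Q 1 1 * v i0 0 * v i1 0 + cf Q 0 2 * v i1 0 * v i1 0).
  case: (eqVneq (v i0 0) 0) => hv0.
    rewrite /infinite_point_in_direction hv0 eqxx /= in hinf.
    case: hinf => _ [[[hs [hd _]] _] _].
    have [U0 U00 U10 U11] := U2vals hP hQ.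
    have hc1 : cf P 0 2 = 0 by move/(congr1 (fun M : 'cV[R]_2 => M i0 0)): hs; rewrite /= evfE U0 mxE.
    rewrite det2 !jacE U00 U10 U11 mulr0 subr0 in hd.
    have hv1' : v i1 0 != 0 by move: hv; rewrite hv0 eqxx.
    exact: chart2 hv0 hv1' hc1 hd hmu.
  rewrite /infinite_point_in_direction hv0 /= in hinf.
  case: hinf => _ [[[hs [hd _]] _] _].
  have [U0 U00 U10 U11] := U1vals (v i1 0 / v i0 0) hP hQ.
  have hs0 := hs; move/(congr1 (fun M : 'cV[R]_2 => M i0 0)): hs0; rewrite /= evfE U0 mxE => hs0.
  rewrite det2 !jacE U00 U10 U11 mulr0 subr0 in hd.
  exact: chart1 hv0 hs0 hd hmu.
have [a11 [a12 [a21 [a22 [c [h [k [n [hA [hc hid]]]]]]]]]] :=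
  core hl hv hv1 hv2 hw hw1 hw2 hmu hinf1 hK.
have hPr : evp P r = 0 by move/(congr1 (fun M : 'cV[R]_2 => M i0 0)): hsing; rewrite /= evfE mkvf0 mxE.
have hQr : evp Q r = 0 by move/(congr1 (fun M : 'cV[R]_2 => M i1 0)): hsing; rewrite /= evfE mkvf1 mxE.
have eP : forall x : 'cV[R]_2, evp P x =
   jac (mkvf P Q) r i0 i0 * (x i0 0 - r i0 0) + jac (mkvf P Q) r i0 i1 * (x i1 0 - r i1 0)
   + (cf P 2 0 * (x i0 0 - r i0 0) * (x i0 0 - r i0 0) + cf P 1 1 * (x i0 0 - r i0 0) * (x i1 0 - r i1 0)
      + cf P 0 2 * (x i1 0 - r i1 0) * (x i1 0 - r i1 0)).
  move=> x; transitivity (evp P x - evp P r); first by rewrite hPr subr0.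
  by rewrite J00 J01 !evpE //; gencf; ring.
have eQ : forall x : 'cV[R]_2, evp Q x =
   jac (mkvf P Q) r i1 i0 * (x i0 0 - r i0 0) + jac (mkvf P Q) r i1 i1 * (x i1 0 - r i1 0)
   + (cf Q 2 0 * (x i0 0 - r i0 0) * (x i0 0 - r i0 0) + cf Q 1 1 * (x i0 0 - r i0 0) * (x i1 0 - r i1 0)
      + cf Q 0 2 * (x i1 0 - r i1 0) * (x i1 0 - r i1 0)).
  move=> x; transitivity (evp Q x - evp Q r); first by rewrite hQr subr0.
  by rewrite J10 J11 !evpE //; gencf; ring.
move: hid eP eQ; generalize (jac (mkvf P Q) r) => JJ hid eP eQ.
pose A : 'M[R]_2 := \matrix_(i, j) (if i == i0 then (if j == i0 then a11 else a12)
                                    else (if j == i0 then a21 else a22)).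
exists A, (- (A *m r)), c, h, k, n.
split.
  by rewrite unitmxE unitfE det2 !mxE eqxx i10.
split => // x.
apply/matrixP => i j; rewrite (ord1 j).
have [E1 E2] := hid (x i0 0 - r i0 0) (x i1 0 - r i1 0).
case: (I2_cases i) => ->.
  rewrite mxE mulmxE2 !evfE mkvf0 mkvf1 evp_nf0 eP eQ.
  rewrite !mxE !sum2 !mxE ?eqxx ?i10 /=.
  apply: (eq_trans E1); ring.
rewrite mxE mulmxE2 !evfE mkvf0 mkvf1 evp_nf1 eP eQ.
rewrite !mxE !sum2 !mxE ?eqxx ?i10 /=.
apply: (eq_trans E2); ring.
Qed.
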